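(* For $k \in \mathbb{N}$ let $o(k) \in \mathbb{N}_0$ be the smallest $n \in \mathbb{N}_0$ with $2^n - n \ge k$. Then (1) $\{n(F) : F \in \mathcal{UHIT}_{\delta=k}\} = \{n(F) : F \in \mathcal{MU}_{\delta=k}\} = \{n \in \mathbb{N}_0 : n \ge o(k)\}$; (2) $\{c(F) : F \in \mathcal{UHIT}_{\delta=k}\} = \{c(F) : F \in \mathcal{MU}_{\delta=k}\} = \{n \in \mathbb{N} : n \ge o(k) + k\}$.
   Context: Literals come with a fixed-point-free involution $x \mapsto \overline{x}$; variables are positive literals. A clause is a finite set $C$ of literals with $C \cap \overline{C} = \emptyset$; a clause-set is a finite set of clauses. $\mathrm{var}(F)$, $n(F) = |\mathrm{var}(F)|$, $c(F) = |F|$, $\delta(F) = c(F) - n(F)$. $\mathcal{MU}$ is the class of minimally unsatisfiable clause-sets (unsatisfiable, but removing any clause gives a satisfiable clause-set). $F$ is hitting if for all distinct $C, D \in F$, $C \cap \overline{D} \ne \emptyset$; $\mathcal{UHIT}$ is the class of unsatisfiable hitting clause-sets. $\mathcal{C}_{\delta=k} = \{F \in \mathcal{C} : \delta(F) = k\}$. *)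

(* Defs.v *)
From mathcomp Require Import all_boot all_order all_algebra.
From mathcomp Require Import finmap zify.
Set Implicit Arguments. Unset Strict Implicit. Unset Printing Implicit Defensive.
Local Open Scope fset_scope.

(* A literal is a pair (variable, sign); variables are natural numbers.
   The positive literal of variable v is (v, true). *)
Definition lit := (nat * bool)%type.
Definition comp (l : lit) : lit := (l.1, ~~ l.2).

Definition clause := {fset lit}.
Definition clauseset := {fset clause}.

Definition is_clause (C : clause) : Prop := forall l, l \in C -> comp l \notin C.
Definition is_clauseset (F : clauseset) : Prop := forall C, C \in F -> is_clause C.

Definition vars (F : clauseset) : {fset nat} :=
  [fset l.1 | l in \bigcup_(C <- F) C].
Definition nvar (F : clauseset) : nat := #|` vars F|.
Definition ncl (F : clauseset) : nat := #|` F|.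
Definition deficiency (F : clauseset) : int := (ncl F)%:Z - (nvar F)%:Z.

Definition sat_clause (f : nat -> bool) (C : clause) : Prop :=
  exists2 l, l \in C & f l.1 = l.2.
Definition satisfiable (F : clauseset) : Prop :=
  exists f : nat -> bool, forall C, C \in F -> sat_clause f C.

Definition MU (F : clauseset) : Prop :=
  [/\ is_clauseset F, ~ satisfiable F &
      forall C, C \in F -> satisfiable (F `\ C)].

Definition hitting (F : clauseset) : Prop :=
  forall C D, C \in F -> D \in F -> C <> D -> exists2 l, l \in C & comp l \in D.

Definition UHIT (F : clauseset) : Prop :=
  [/\ is_clauseset F, ~ satisfiable F & hitting F].

Lemma o_exists (k : nat) : exists n, k <= 2 ^ n - n.
Proof.
exists k; suff: k + k <= 2 ^ k by lia.
elim: k => // k IH; rewrite expnS.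
case: k IH => // k IH; have := ltn_expl k.+1 (isT : 1 < 2); lia.
Qed.

Definition o (k : nat) : nat := ex_minn (o_exists k).

(* Main.v *)
Require Import Defs.
From mathcomp Require Import all_boot all_order all_algebra.
From mathcomp Require Import finmap.
From mathcomp Require Import zify.
From Stdlib Require Import ClassicalEpsilon.
Set Implicit Arguments. Unset Strict Implicit. Unset Printing Implicit Defensive.
Local Open Scope fset_scope.
Lemma varsP (F : clauseset) x :
  reflect (exists C l, [/\ C \in F, l \in C & l.1 = x]) (x \in vars F).
Proof.
apply: (iffP idP).
- case/imfsetP => /= l /bigfcupP [C /andP [CF _] lC] ->.
  by exists C, l.
- case=> C [l [CF lC <-]]; apply/imfsetP; exists l => //=.
  by apply/bigfcupP; exists C => //; rewrite CF.
Qed.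

Definition ext (b : bool) (v : nat) (F : clauseset) : clauseset :=
  [fset (v, b) |` C | C in F].
Definition splitc v (A B : clauseset) : clauseset := ext true v A `|` ext false v B.

Lemma uhit_nonempty F : UHIT F -> exists C, C \in F.
Proof.
case=> _ Hu _; case: (fset_0Vmem F) => [E|[C CF]]; last by exists C.
by exfalso; apply: Hu; exists (fun _ => true) => C; rewrite E.
Qed.

Lemma notin_vars F v C l : v \notin vars F -> C \in F -> l \in C -> l.1 != v.
Proof.
move=> nv CF lC; apply/eqP => e; move/negP: nv; apply; apply/varsP.
by exists C, l.
Qed.

Lemma ext_mem b v F D : D \in ext b v F <-> exists2 C, C \in F & D = (v, b) |` C.
Proof. by split => [/imfsetP [C CF ->]|[C CF ->]]; [exists C | apply/imfsetP; exists C]. Qed.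

Lemma sat_ext f v b C : sat_clause f ((v, b) |` C) <-> f v = b \/ sat_clause f C.
Proof.
split.
- case=> l; rewrite in_fset1U => /orP [/eqP -> /= ->|lC e]; first by left.
  by right; exists l.
- case=> [e|[l lC e]]; first by exists (v, b) => //; rewrite in_fset1U eqxx.
  by exists l => //; rewrite in_fset1U lC orbT.
Qed.

Lemma split_uhit v A B : UHIT A -> UHIT B -> v \notin vars A -> v \notin vars B ->
  UHIT (splitc v A B).
Proof.
move=> [cA uA hA] [cB uB hB] nA nB.
have cl : forall b F, is_clauseset F -> v \notin vars F -> is_clauseset (ext b v F).
  move=> b F cF nF D /ext_mem [C CF ->] l.
  rewrite !in_fset1U /Defs.comp => /orP [/eqP ->|lC] /=.
    apply/negP => /orP [/eqP [] /=|]; first by case: b.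
    move=> h; have := notin_vars nF CF h; by rewrite eqxx.
  apply/negP => /orP [/eqP e|]; last by apply/negP; apply: (cF C CF l lC).
  have := notin_vars nF CF lC; by rewrite -[l.1]/((l.1, ~~ l.2).1) e eqxx.
split.
- by move=> D; rewrite in_fsetU => /orP []; [apply: cl | apply: cl].
- case=> f hf; case E: (f v).
  + apply: uB; exists f => C CB.
    have : sat_clause f ((v, false) |` C).
      by apply: hf; rewrite in_fsetU; apply/orP; right; apply/ext_mem; exists C.
    by case/sat_ext => //; rewrite E.
  + apply: uA; exists f => C CA.
    have : sat_clause f ((v, true) |` C).
      by apply: hf; rewrite in_fsetU; apply/orP; left; apply/ext_mem; exists C.
    by case/sat_ext => //; rewrite E.
- have side : forall b F, hitting F -> forall C D, C \in ext b v F -> D \in ext b v F ->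
      C <> D -> exists2 l, l \in C & Defs.comp l \in D.
    move=> b F hF C D /ext_mem [C' C'F ->] /ext_mem [D' D'F ->] ne.
    have ne' : C' <> D' by move=> e; apply: ne; rewrite e.
    case: (hF _ _ C'F D'F ne') => l lC lD; exists l; rewrite in_fset1U ?lC ?lD orbT //.
  move=> C D; rewrite !in_fsetU => /orP [CA|CB] /orP [DA|DB] ne.
  + exact: side hA C D CA DA ne.
  + case/ext_mem: CA => C' _ ->; case/ext_mem: DB => D' _ ->.
    by exists (v, true); rewrite in_fset1U eqxx.
  + case/ext_mem: CB => C' _ ->; case/ext_mem: DA => D' _ ->.
    by exists (v, false); rewrite in_fset1U eqxx.
  + exact: side hB C D CB DB ne.
Qed.

Lemma ext_card b v F : v \notin vars F -> #|` ext b v F| = #|` F|.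
Proof.
move=> nF; rewrite /ext card_in_imfset //= => C D CF DF e.
apply/fsetP => l.
have := congr1 (fun S => l \in S) e; rewrite /= !in_fset1U.
case: (l =P (v, b)) => [->|_] //= _.
have h1 : (v, b) \notin C.
  by apply/negP => h; have := notin_vars nF CF h; rewrite eqxx.
have h2 : (v, b) \notin D.
  by apply/negP => h; have := notin_vars nF DF h; rewrite eqxx.
by rewrite (negbTE h1) (negbTE h2).
Qed.

Lemma split_card v A B : v \notin vars A -> v \notin vars B ->
  ncl (splitc v A B) = (ncl A + ncl B)%N.
Proof.
move=> nA nB; rewrite /ncl /splitc.
have := cardfsUI (ext true v A) (ext false v B).
have -> : ext true v A `&` ext false v B = fset0.
  apply/fsetP => D; rewrite in_fsetI in_fset0.
  apply/negP => /andP [/ext_mem [C CA ->] /ext_mem [C' C'B e]].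
  have : (v, true) \in (v, false) |` C' by rewrite -e in_fset1U eqxx.
  rewrite in_fset1U => /orP [/eqP //|h].
  by have := notin_vars nB C'B h; rewrite eqxx.
by rewrite cardfs0 addn0 !ext_card // => ->.
Qed.

Lemma split_vars v A B x : (exists C, C \in A) -> (exists C, C \in B) ->
  (x \in vars (splitc v A B)) <-> [\/ x = v, x \in vars A | x \in vars B].
Proof.
move=> [C0 C0A] [D0 D0B]; split.
- case/varsP => D [l [] ]; rewrite in_fsetU => /orP [] /ext_mem [C CF ->];
  rewrite in_fset1U => /orP [/eqP -> <- | lC <-]; try by constructor 1.
  + by constructor 2; apply/varsP; exists C, l.
  + by constructor 3; apply/varsP; exists C, l.
- case=> [->|/varsP [C [l [CF lC <-]]]|/varsP [C [l [CF lC <-]]]]; apply/varsP.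
  + exists ((v, true) |` C0), (v, true); split => //; last by rewrite in_fset1U eqxx.
    by rewrite in_fsetU; apply/orP; left; apply/ext_mem; exists C0.
  + exists ((v, true) |` C), l; split => //; last by rewrite in_fset1U lC orbT.
    by rewrite in_fsetU; apply/orP; left; apply/ext_mem; exists C.
  + exists ((v, false) |` C), l; split => //; last by rewrite in_fset1U lC orbT.
    by rewrite in_fsetU; apply/orP; right; apply/ext_mem; exists C.
Qed.

Fixpoint T (n L : nat) : clauseset :=
  match n with
  | 0 => [fset fset0]
  | n'.+1 => let L2 := minn (L - n) (2 ^ n') in
             if L2 == 0 then T n' L else splitc n' (T n' (L - L2)) (T n' L2)
  end.

Lemma le_pow n : n < 2 ^ n.
Proof. by rewrite ltn_expl. Qed.

Lemma T_ok n L : 0 < L <= 2 ^ n ->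
  [/\ UHIT (T n L), ncl (T n L) = L, (forall x, x \in vars (T n L) -> x < n)
   & (n < L -> forall x, x < n -> x \in vars (T n L))].
Proof.
elim: n L => [|n IH] L HL /=.
- have -> : L = 1 by move: HL; rewrite expn0; lia.
  split => //.
  + split.
    * by move=> C; rewrite in_fset1 => /eqP -> l; rewrite in_fset0.
    * by case=> f /(_ fset0); rewrite in_fset1 eqxx => /(_ isT) [l]; rewrite in_fset0.
    * by move=> C D; rewrite !in_fset1 => /eqP -> /eqP ->.
  + by rewrite /ncl cardfs1.
  + by move=> x /varsP [C [l [] ]]; rewrite in_fset1 => /eqP ->; rewrite in_fset0.
- have p2 := le_pow n; have e2 : 2 ^ n.+1 = 2 * 2 ^ n by rewrite expnS.
  set L2 := minn (L - n.+1) (2 ^ n).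
  case: eqP => [z|/eqP nz].
  + have [u c vl _] := IH L ltac:(lia).
    split => // [x /vl|]; first lia.
    lia.
  + have [uA cA vA fA] := IH (L - L2) ltac:(lia).
    have [uB cB vB fB] := IH L2 ltac:(lia).
    have nA : n \notin vars (T n (L - L2)) by apply/negP => /vA; lia.
    have nB : n \notin vars (T n L2) by apply/negP => /vB; lia.
    split.
    * exact: split_uhit.
    * rewrite split_card // cA cB; lia.
    * move=> x /(split_vars n x (uhit_nonempty uA) (uhit_nonempty uB)) [->|/vA|/vB]; lia.
    * move=> _ x xn; apply/(split_vars n x (uhit_nonempty uA) (uhit_nonempty uB)).
      case: (x =P n) => [->|ne]; first by constructor 1.
      constructor 2; apply: fA; lia.
Qed.

Lemma T_nvar n L : n < L <= 2 ^ n -> nvar (T n L) = n.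
Proof.
move=> h; have [_ _ vs fs] := T_ok (n:=n) (L:=L) ltac:(lia).
rewrite /nvar; have -> : vars (T n L) = [fset x in iota 0 n].
  apply/fsetP => x; rewrite inE mem_iota /= add0n.
  apply/idP/idP => [/vs //| xn]; apply: fs => //; lia.
by rewrite card_fseq undup_id ?iota_uniq // size_iota.
Qed.

Lemma uhit_mu F : UHIT F -> MU F.
Proof.
case=> cF uF hF; split => // C CF.
pose f x := (x, false) \in C.
exists f => D; rewrite in_fsetD1 => /andP [/eqP nDC DF].
have [l lC lD] := hF C D CF DF (fun e => nDC (esym e)).
exists (Defs.comp l) => //=; rewrite /f.
case: l lC {lD} => x [] lC /=.
- by apply/negbTE; apply: (cF C CF (x, true) lC).
- by [].
Qed.

Lemma pow_mono m n : m <= n -> 2 ^ m - m <= 2 ^ n - n.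
Proof.
elim: n => [|n IH]; first by rewrite leqn0 => /eqP ->.
rewrite leq_eqVlt => /orP [/eqP -> //|]; rewrite ltnS => /IH.
have := le_pow n; rewrite expnS; lia.
Qed.

Lemma construct k n : 0 < k -> o k <= n ->
  exists F, [/\ UHIT F, nvar F = n & ncl F = (n + k)%N].
Proof.
move=> hk; rewrite /o; case: ex_minnP => m Pm _ mn.
have := pow_mono mn; have := le_pow n => h1 h2.
have hL : n < n + k <= 2 ^ n by lia.
have [u c _ _] := T_ok (n:=n) (L:=n+k) ltac:(lia).
by exists (T n (n + k)); split => //; apply: T_nvar.
Qed.

Lemma o_min k n : k <= 2 ^ n - n -> o k <= n.
Proof. by rewrite /o; case: ex_minnP => m _ mm /mm. Qed.
Lemma mu_bound F : MU F -> ncl F <= 2 ^ nvar F.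
Proof.
case=> _ Hu Hs.
have H : forall C, {f : nat -> bool | C \in F -> forall D, D \in F `\ C -> sat_clause f D}.
  move=> C; apply: constructive_indefinite_description.
  case: (boolP (C \in F)) => CF; last by exists (fun _ => true).
  by case: (Hs C CF) => f hf; exists f.
pose h C := [fset x in vars F | sval (H C) x].
have hinj : {in F &, injective h}.
  move=> C D CF DF hCD; apply/eqP/negPn/negP => nCD.
  have fC := svalP (H C) CF; have fD := svalP (H D) DF.
  case: (fD C) => [|l lC el]; first by rewrite in_fsetD1 CF andbT; exact: nCD.
  have nsC : ~ sat_clause (sval (H C)) C.
    move=> sC; apply: Hu; exists (sval (H C)) => E EF.
    case: (E =P C) => [->//|nE]; apply: fC; rewrite in_fsetD1 EF andbT.
    by apply/eqP.
  apply: nsC; exists l => //.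
  have lv : l.1 \in vars F by apply/varsP; exists C, l.
  have : (l.1 \in h C) = (l.1 \in h D) by rewrite hCD.
  rewrite /h !inE /= lv /= el.
  by case: (sval (H C) l.1); case: (l.2); move=> //= ->.
rewrite /ncl /nvar -card_fpowerset.
have -> : #|` F| = #|` [fset h C | C in F]|.
  by rewrite card_in_imfset.
apply: fsubset_leq_card; apply/fsubsetP => S /imfsetP [C CF ->].
by rewrite fpowersetE; apply/fsubsetP => x; rewrite /h inE => /andP[].
Qed.

Lemma def_eq (F : clauseset) k : deficiency F = Posz k <-> ncl F = (nvar F + k)%N.
Proof. rewrite /deficiency; split => h; lia. Qed.

Lemma mu_o F k : MU F -> ncl F = (nvar F + k)%N -> o k <= nvar F.
Proof. move=> /mu_bound h e; apply: o_min; rewrite e in h; lia. Qed.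

Theorem theorem6p13 (k : nat) (hk : 0 < k) :
  (forall n : nat,
     ((exists F, UHIT F /\ deficiency F = Posz k /\ nvar F = n) <->
      (exists F, MU F /\ deficiency F = Posz k /\ nvar F = n)) /\
     ((exists F, MU F /\ deficiency F = Posz k /\ nvar F = n) <-> o k <= n)) /\
  (forall m : nat,
     ((exists F, UHIT F /\ deficiency F = Posz k /\ ncl F = m) <->
      (exists F, MU F /\ deficiency F = Posz k /\ ncl F = m)) /\
     ((exists F, MU F /\ deficiency F = Posz k /\ ncl F = m) <-> (0 < m /\ o k + k <= m))).
Proof.
have muo : forall n, (exists F, MU F /\ deficiency F = Posz k /\ nvar F = n) -> o k <= n.
  by move=> n [F [mF [/def_eq d <-]]]; apply: mu_o d.
have cons : forall n, o k <= n -> exists F, UHIT F /\ deficiency F = Posz k /\ nvar F = n.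
  move=> n /(construct hk) [F [u v c]]; exists F; split => //; split => //.
  by apply/def_eq; rewrite v.
split => [n|m].
- split; split.
  + by case=> F [u h]; exists F; split => //; apply: uhit_mu.
  + by move/muo/cons.
  + exact: muo.
  + by move/cons => [F [u h]]; exists F; split => //; apply: uhit_mu.
- have muc : (exists F, MU F /\ deficiency F = Posz k /\ ncl F = m) -> 0 < m /\ o k + k <= m.
    case=> F [mF [/def_eq d <-]]; have := mu_o mF d; lia.
  have consc : 0 < m /\ o k + k <= m -> exists F, UHIT F /\ deficiency F = Posz k /\ ncl F = m.
    case=> _ h; have [F [u v c]] := construct hk (n := m - k) ltac:(lia).
    exists F; split => //; split; last lia.
    by apply/def_eq; rewrite v c.
  split; split.
  + by case=> F [u h]; exists F; split => //; apply: uhit_mu.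
  + by move/muc/consc.
  + exact: muc.
  + by move/consc => [F [u h]]; exists F; split => //; apply: uhit_mu.
Qed.
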